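(* Let $d$ be a thin dimension vector with $e(d)=1$, let $b=b_1$ be the last position of the unique internal even string of ones, and let $J=J(d)$, $c=\max J$ and $T=\Delta(J)$. Let $\phi^{b-1}:P(b)\to P(b-1)$ be the unique homomorphism sending the last basis vector of $P(b)_t$ to the last basis vector of $P(b-1)_t$, and $\phi^{b}:P(b)\to P(c)$ the unique homomorphism sending the last basis vector $e_r$ of $P(b)_t=k^r$ to $e_r\in P(c)_t$. Then $\psi=(\phi^{b-1},\phi^b):P(b)\to P(b-1)\oplus P(c)$ is injective and its cokernel is isomorphic to $T$; that is, $0\to P(b)\xrightarrow{\psi}P(b-1)\oplus P(c)\to T\to 0$ is a projective resolution of $T$.
   Context: Let $k$ be an algebraically closed field. A thin dimension vector is $d=(d_1,\dots,d_t)\in\{0,1\}^t$ with $d_1=d_t=1$ and no two consecutive entries equal to $0$. Write its entries as maximal strings of consecutive ones of lengths $a_0,a_1,\dots,a_{r+1}$ (in order, separated by single zeros); the strings of lengths $a_1,\dots,a_r$ are called internal, and $e(d)=\#\{1\le i\le r: a_i\text{ even}\}$. Let $b_1<\dots<b_{e(d)}$ be the positions of the last entries of the internal strings of even length. Define $J(d)$ as the set of $j\in\{1,\dots,t\}$ such that either $j\le b_1-1$ and $j\equiv b_1-1\pmod 2$; or $b_i+2\le j\le b_{i+1}-1$ and $j\equiv b_i \pmod 2$ for some $1\le i<e(d)$; or $j\ge b_{e(d)}+2$ and $j\equiv b_{e(d)}\pmod 2$. $\mathcal A_{t,1}$ is the quotient of the path algebra over $k$ of the quiver with vertices $1,\dots,t$,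 arrows $\alpha_i:i\to i+1$ ($1\le i\le t-1$) and $\beta_j:j+2\to j$ ($1\le j\le t-2$), by the relations $\beta_1\alpha_2=0$ and $\beta_{i+1}\alpha_{i+2}=\alpha_i\beta_i$ for $1\le i\le t-3$ (compositions right to left); modules are representations satisfying these relations. A subset $J\subseteq\{1,\dots,t\}$ is standard if $j\in J\Rightarrow j+1\notin J$. For nonempty standard $J$, $\Delta(J)_i=k^{l}$ with $l=\#\{j\in J: j\le i\}$ and basis $e_1,\dots,e_l$; $\alpha_i$ is the inclusion $e_h\mapsto e_h$, and $\beta_j(e_h)=e_{h-1}$ for $h\ge 2$, $\beta_j(e_1)=0$. Put $\Delta(i)=\Delta(\{i\})$ and $P(i)=\Delta(\{i': 1\le i'\le i,\ i'\equiv i\pmod 2\})$; $P(i)$ is the projective cover of $\Delta(i)$. *)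

(* Defs.v *)
From mathcomp Require Import all_boot all_order all_algebra.
Set Implicit Arguments. Unset Strict Implicit. Unset Printing Implicit Defensive.
Import GRing.Theory.
Local Open Scope ring_scope.

(* d : seq bool of length t; dv d i = d_i for 1 <= i <= t, false otherwise *)
Definition dv (d : seq bool) (i : nat) : bool := (0 < i)%N && nth false d i.-1.

Definition thin (d : seq bool) : bool :=
  [&& (0 < size d)%N, dv d 1, dv d (size d) &
      all (fun i => dv d i || dv d i.+1) (iota 1 (size d).-1)].

Definition is_string (d : seq bool) (p q : nat) : bool :=
  [&& (1 <= p)%N, (p <= q)%N, (q <= size d)%N,
      all (dv d) (iota p (q.+1 - p)), ~~ dv d p.-1 & ~~ dv d q.+1].

Definition int_even_end (d : seq bool) (q : nat) : bool :=
  has (fun p => [&& is_string d p q, (1 < p)%N, (q < size d)%N & ~~ odd (q.+1 - p)])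
      (iota 1 q).

Definition bseq (d : seq bool) : seq nat := filter (int_even_end d) (iota 1 (size d)).

Definition e (d : seq bool) : nat := size (bseq d).

Definition inJ (d : seq bool) (j : nat) : bool :=
  let bs := bseq d in
  [&& (1 <= j)%N, (j <= size d)%N &
   if bs is b1 :: _ then
     [|| (j <= b1 - 1)%N && (odd j == odd (b1 - 1)),
         has (fun i => [&& (nth 0 bs i + 2 <= j)%N, (j <= nth 0 bs i.+1 - 1)%N
                          & odd j == odd (nth 0 bs i)]) (iota 0 (size bs).-1)
       | (last 0 bs + 2 <= j)%N && (odd j == odd (last 0 bs))]
   else false].

Definition maxJ (d : seq bool) : nat := \max_(j <- iota 1 (size d) | inJ d j) j.

(* Vector spaces are k^n, linear maps are matrices acting on row vectors:
   v |-> v *m M.  alpha i : V_i -> V_{i+1},  beta j : V_{j+2} -> V_j. *)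
Record rep (k : fieldType) := Rep {
  rdim : nat -> nat;
  ralpha : forall i, 'M[k]_(rdim i, rdim i.+1);
  rbeta : forall j, 'M[k]_(rdim j.+2, rdim j) }.

Definition is_hom (k : fieldType) (t : nat) (V W : rep k)
  (f : forall i, 'M[k]_(rdim V i, rdim W i)) : Prop :=
  (forall i, (1 <= i)%N -> (i < t)%N -> ralpha V i *m f i.+1 = f i *m ralpha W i) /\
  (forall j, (1 <= j)%N -> (j.+2 <= t)%N -> rbeta V j *m f j = f j.+2 *m rbeta W j).

Definition dsum (k : fieldType) (V W : rep k) : rep k :=
  @Rep k (fun i => (rdim V i + rdim W i)%N)
    (fun i => block_mx (ralpha V i) 0 0 (ralpha W i))
    (fun j => block_mx (rbeta V j) 0 0 (rbeta W j)).

Definition incl_mx (k : fieldType) m n : 'M[k]_(m, n) :=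
  \matrix_(a < m, b < n) ((a : nat) == b)%:R.
(* e_h |-> e_{h-1} (0-indexed: e_{a} |-> e_{a-1}, e_0 |-> 0) *)
Definition shift_mx (k : fieldType) m n : 'M[k]_(m, n) :=
  \matrix_(a < m, b < n) ((a : nat) == b.+1)%:R.

Definition Delta (k : fieldType) (J : pred nat) : rep k :=
  @Rep k (fun i => count J (iota 1 i))
    (fun i => incl_mx k _ _) (fun j => shift_mx k _ _).

Definition Pset (i : nat) : pred nat :=
  fun j => [&& (1 <= j)%N, (j <= i)%N & odd j == odd i].

Definition Proj (k : fieldType) (i : nat) : rep k := Delta k (Pset i).

(* Main.v *)
Require Import Defs.
From mathcomp Require Import all_boot all_order all_algebra zify.
Set Implicit Arguments. Unset Strict Implicit. Unset Printing Implicit Defensive.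
Import GRing.Theory.
Local Open Scope ring_scope.
Section Aux.
Variable k : fieldType.

Definition IM (s m n : nat) : 'M[k]_(m, n) := \matrix_(a < m, c < n) ((a : nat) == c + s)%N%:R.

Lemma incl_IM m n : incl_mx k m n = IM 0 m n.
Proof. by apply/matrixP => a c; rewrite !mxE addn0. Qed.
Lemma shift_IM m n : shift_mx k m n = IM 1 m n.
Proof. by apply/matrixP => a c; rewrite !mxE addn1. Qed.

Lemma sum_delta (G : nat -> k) n j :
  \sum_(x < n) (((x : nat) == j)%:R * G x) = (j < n)%:R * G j.
Proof.
case: (ltnP j n) => h.
  rewrite (bigD1 (Ordinal h)) //= eqxx mul1r big1 ?addr0 ?mul1r // => x hx.
  by rewrite (_ : (x : nat) == j = false) ?mul0r //; apply/negbTE; move: hx; apply: contra => /eqP e; apply/eqP/val_inj.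
rewrite mul0r big1 // => x _; rewrite (_ : (x : nat) == j = false) ?mul0r //.
apply/negbTE; have := ltn_ord x; lia.
Qed.

Lemma IM_mul s u m n p : IM s m n *m IM u n p =
  \matrix_(a < m, c < p) (((a : nat) == c + u + s) && (c + u < n))%N%:R.
Proof.
apply/matrixP => a c; rewrite !mxE.
rewrite (eq_bigr (fun x : 'I_n => (((x : nat) == c + u)%N%:R * (((a:nat) == c + u + s)%N%:R : k)))); last first.
  by move=> x _; rewrite !mxE; case: (_ =P c + u)%N => [->|]; rewrite ?mulr0 ?mul0r ?mulr1 ?mul1r.
by rewrite (sum_delta (fun _ => ((a:nat) == c + u + s)%N%:R)) -natrM mulnb andbC.
Qed.

Lemma IM_mulE s u s' u' m n n' p : (u + s = u' + s')%N ->
  (forall a c, (a < m)%N -> (c < p)%N -> a = (c + u + s)%N -> (c + u < n)%N = (c + u' < n')%N) ->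
  IM s m n *m IM u n p = IM s' m n' *m IM u' n' p.
Proof.
move=> e h; rewrite !IM_mul; apply/matrixP => a c; rewrite !mxE.
rewrite -!addnA e.
case: eqP => // ea /=; rewrite (h a c) //; lia.
Qed.

Definition ent m n (M : 'M[k]_(m, n)) (a c : nat) : k :=
  if (insub a : option 'I_m) is Some x then
    (if (insub c : option 'I_n) is Some y then M x y else 0) else 0.

Lemma entE m n (M : 'M[k]_(m, n)) (x : 'I_m) (y : 'I_n) : ent M x y = M x y.
Proof. by rewrite /ent !valK. Qed.

Lemma ent_oob m n (M : 'M[k]_(m, n)) a c : ~~ ((a < m) && (c < n))%N -> ent M a c = 0.
Proof.
rewrite negb_and => /orP [h|h]; rewrite /ent.
  by rewrite insubN.
by case: insub => // x; rewrite insubN.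
Qed.

Lemma ent_inj m n (M N : 'M[k]_(m, n)) : (forall a c, ent M a c = ent N a c) -> M = N.
Proof. by move=> h; apply/matrixP => x y; rewrite -!entE h. Qed.

Lemma ent0 m n a c : ent (0 : 'M[k]_(m, n)) a c = 0.
Proof.
case: (boolP ((a < m) && (c < n))%N) => h; last by rewrite ent_oob.
case/andP: h => ha hc.
by rewrite -[a]/(nat_of_ord (Ordinal ha)) -[c]/(nat_of_ord (Ordinal hc)) entE mxE.
Qed.

Lemma ent_sub m n (M N : 'M[k]_(m, n)) a c : ent (M - N) a c = ent M a c - ent N a c.
Proof.
case: (boolP ((a < m) && (c < n))%N) => h; last by rewrite !ent_oob // subr0.
case/andP: h => ha hc.
by rewrite -[a]/(nat_of_ord (Ordinal ha)) -[c]/(nat_of_ord (Ordinal hc)) !entE !mxE.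
Qed.

Lemma ent_mul m n p (M : 'M[k]_(m, n)) (N : 'M[k]_(n, p)) a c :
  ent (M *m N) a c = \sum_(x < n) ent M a x * ent N x c.
Proof.
case: (boolP ((a < m) && (c < p))%N) => h.
  case/andP: h => ha hc.
  rewrite -[a]/(nat_of_ord (Ordinal ha)) -[c]/(nat_of_ord (Ordinal hc)) !entE mxE.
  by apply: eq_bigr => x _; rewrite !entE.
rewrite ent_oob // big1 // => x _.
move: h; rewrite negb_and => /orP [h|h].
  by rewrite (ent_oob M) ?mul0r // negb_and h.
by rewrite (ent_oob N) ?mulr0 // negb_and h orbT.
Qed.

Lemma ent_IMM u m n p (M : 'M[k]_(n, p)) a c :
  ent (IM u m n *m M) a c = ((a < m) && (u <= a) && (a - u < n))%N%:R * ent M (a - u) c.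
Proof.
rewrite ent_mul.
case: (boolP (a < m)%N) => ha.
  rewrite (eq_bigr (fun x : 'I_n => ((x : nat) == a - u)%N%:R * (((u <= a)%N%:R : k) * ent M x c))).
    rewrite (sum_delta (fun x => ((u <= a)%N%:R : k) * ent M x c)) mulrA -natrM mulnb /=.
    by rewrite andbC.
  move=> x _; rewrite -[a]/(nat_of_ord (Ordinal ha)) entE mxE /=.
  case: eqP => e; case: eqP => e'; rewrite ?mul0r ?mul1r ?mulr0 //; try lia;
  by case: (leqP u a) => hu; rewrite ?mul1r ?mul0r //; lia.
rewrite big1 ?(negbTE ha) ?mul0r // => x _.
by rewrite ent_oob ?mul0r // (negbTE ha).
Qed.

Lemma ent_MIM u m n p (M : 'M[k]_(m, n)) a c :
  ent (M *m IM u n p) a c = ((c < p) && (c + u < n))%N%:R * ent M a (c + u).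
Proof.
rewrite ent_mul.
case: (boolP (c < p)%N) => hc.
  rewrite (eq_bigr (fun x : 'I_n => ((x : nat) == c + u)%N%:R * ent M a x)).
    by rewrite (sum_delta (fun x => ent M a x)).
  move=> x _; rewrite -[c]/(nat_of_ord (Ordinal hc)) entE mxE /= mulrC.
  by [].
rewrite big1 ?(negbTE hc) ?mul0r // => x _.
by rewrite (ent_oob (IM u n p)) ?mulr0 // (negbTE hc) andbF.
Qed.

End Aux.
Local Open Scope nat_scope.
Lemma oddE x y : (odd x == odd y) = (x %% 2 == y %% 2).
Proof. by rewrite !modn2; case: (odd x); case: (odd y). Qed.

Lemma PsetE b j : Pset b j = [&& 1 <= j, j <= b & j %% 2 == b %% 2].
Proof. by rewrite /Pset oddE. Qed.

Lemma count_iotaS (P : pred nat) i : count P (iota 1 i.+1) = count P (iota 1 i) + P i.+1.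
Proof. by rewrite -[i.+1]addn1 iotaD count_cat /= add1n addn0 addn1. Qed.

Lemma cntP b i : count (Pset b) (iota 1 i) = (minn i b + b %% 2) %/ 2.
Proof.
elim: i => [|i IH]; first by rewrite /= min0n; lia.
rewrite count_iotaS IH PsetE; lia.
Qed.

Lemma cnt_mono (X : pred nat) i : count X (iota 1 i) <= count X (iota 1 i.+1).
Proof. by rewrite count_iotaS leq_addr. Qed.
Local Open Scope ring_scope.
Lemma hom_unique (k : fieldType) (X : pred nat) (t b : nat)
  (D : forall i, 'M[k]_(count (Pset b) (iota 1 i), count X (iota 1 i))) :
  (1 <= b)%N -> (b <= t)%N ->
  @is_hom k t (Proj k b) (Delta k X) D ->
  (forall c, ent (D t) (count (Pset b) (iota 1 t)).-1 c = 0) ->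
  forall i, (1 <= i <= t)%N -> D i = 0.
Proof.
move=> hb hbt [hA hB] hT.
set r := count (Pset b) (iota 1 t) in hT.
have hr : r = ((b + b %% 2) %/ 2)%N by rewrite /r cntP; congr (_ %/ _)%N; lia.
have hA' : forall i a c, (1 <= i)%N -> (i < t)%N ->
   ((a < count (Pset b) (iota 1 i)) && (0 <= a) && (a < count (Pset b) (iota 1 i.+1)))%N%:R
     * ent (D i.+1) a c =
   ((c < count X (iota 1 i.+1)) && (c < count X (iota 1 i)))%N%:R * ent (D i) a c.
  move=> i a c h1 h2; have := congr1 (fun M => ent M a c) (hA i h1 h2).
  by rewrite /= !incl_IM ent_IMM ent_MIM subn0 addn0.
have hB' : forall j a c, (1 <= j)%N -> (j.+2 <= t)%N ->
   ((a < count (Pset b) (iota 1 j.+2)) && (1 <= a) && (a - 1 < count (Pset b) (iota 1 j)))%N%:R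
     * ent (D j) (a - 1) c =
   ((c < count X (iota 1 j)) && (c + 1 < count X (iota 1 j.+2)))%N%:R * ent (D j.+2) a (c + 1).
  move=> j a c h1 h2; have := congr1 (fun M => ent M a c) (hB j h1 h2).
  by rewrite /= !shift_IM ent_IMM ent_MIM.
have Z0 : forall i c, (1 <= i <= t)%N -> ent (D i) r.-1 c = 0.
  move=> i c /andP [h1 h2].
  case: (ltnP i b) => hi.
    by rewrite ent_oob // negb_and cntP; apply/orP; left; lia.
  suff: forall n i, (i + n)%N = t -> (b <= i)%N -> ent (D i) r.-1 c = 0.
    by move=> H; apply: (H (t - i)%N) => //; lia.
  elim=> [|n IH] i' e hi'.
    by rewrite addn0 in e; rewrite e hT.
  have := hA' i' r.-1 c ltac:(lia) ltac:(lia).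
  rewrite IH; last 2 first; [lia | lia |].
  rewrite mulr0.
  case: (boolP (c < count X (iota 1 i'))%N) => hc; last by rewrite ent_oob // negb_and hc orbT.
  have hc' := leq_trans hc (cnt_mono X i').
  by rewrite hc' mul1r => <-.
have Zall : forall m a, (a + m)%N = r.-1 -> forall i c, (1 <= i <= t)%N -> ent (D i) a c = 0.
  elim=> [|m IH] a ea.
    by rewrite addn0 in ea; rewrite ea; exact: Z0.
  move=> i c /andP [h1 h2].
  have [ja eja] : {ja | ja = (2 * a + 2 - b %% 2)%N} := exist _ _ erefl.
  case: (ltnP i ja) => hi.
    by rewrite ent_oob // negb_and cntP; apply/orP; left; lia.
  suff: forall n i, i = (ja + n)%N -> (i <= t)%N -> ent (D i) a c = 0.
    by move=> H; apply: (H (i - ja)%N) => //; lia.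
  elim=> [|n IHn] i' e hi'.
    have := hB' ja a.+1 c ltac:(lia) ltac:(lia).
    rewrite (IH a.+1) ?mulr0; last 2 first; [lia | lia |].
    rewrite (_ : (_ && _ && _) = true); last by rewrite !cntP; lia.
    by rewrite mul1r subn1 /= e addn0.
  have := hA' (ja + n)%N a c ltac:(lia) ltac:(lia).
  rewrite (IHn (ja + n)%N) // ?mulr0; last by lia.
  rewrite (_ : (_ && _ && _) = true); last by rewrite !cntP; lia.
  by rewrite mul1r e addnS.
move=> i hi; apply: ent_inj => a c; rewrite ent0.
case: (ltnP a r) => ha.
  by apply: (Zall (r.-1 - a)%N) => //; lia.
by rewrite ent_oob // negb_and cntP; apply/orP; left; move/andP: hi => [? ?]; lia.
Qed.
Lemma IM0_id (k : fieldType) m : @IM k 0 m m = 1%:M.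
Proof. by apply/matrixP => a c; rewrite !mxE addn0. Qed.

Lemma vertex_ok (k : fieldType) m n1 nc nT s :
  (m <= nc)%N -> (m <= n1 + s)%N -> (nT + m = n1 + nc)%N -> ((nT <= n1) || (nT + s <= nc))%N ->
  let M := row_mx (@IM k s m n1) (@IM k 0 m nc) in
  let P := col_mx (- @IM k 0 n1 nT) (@IM k s nc nT) in
  [/\ row_free M, row_full P & (M == kermx P)%MS].
Proof.
move=> h1 h2 h3 h4 M P.
have fM : row_free M.
  apply/row_freeP; exists (col_mx 0 (@IM k 0 nc m)).
  rewrite mul_row_col mulmx0 add0r -IM0_id IM_mul; apply/matrixP => a c; rewrite !mxE.
  by rewrite !addn0 (leq_trans (ltn_ord c) h1) andbT.
have fP : row_full P.
  apply/row_fullP.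
  exists (row_mx (- @IM k 0 nT n1) (\matrix_(a < nT, x < nc) (((n1 <= a) && ((x : nat) == a + s))%N%:R))).
  rewrite mul_row_col mulNmx mulmxN opprK IM_mul; apply/matrixP => a c; rewrite !mxE.
  rewrite (eq_bigr (fun x : 'I_nc => ((x : nat) == a + s)%N%:R * (((n1 <= a) && ((a:nat) == c))%N%:R : k))); last first.
    move=> x _; rewrite !mxE; case: (_ =P a + s)%N => [->|]; rewrite ?andbF ?mul0r ?mulr0 //.
    by rewrite andbT mul1r eqn_add2r -natrM mulnb.
  rewrite (sum_delta (fun _ => (((n1 <= a) && ((a:nat) == c))%N%:R : k))) !addn0 -natrM.
  case: (a =P c :> nat) => e; last first.
    rewrite andbF /= muln0 addr0 (_ : (a == c) = false) //; apply/negbTE; apply/eqP => e'; by apply: e; rewrite e'.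
  have -> : a = c by apply: val_inj.
  rewrite eqxx /=; have := ltn_ord c.
  case: (ltnP c n1) => hc _ /=; first by rewrite muln0 mulr0n addr0.
  rewrite add0r muln1 (_ : (c + s < nc)%N = true) //.
  have := ltn_ord c; lia.
split=> //.
have sM : (M <= kermx P)%MS.
  apply/sub_kermxP; rewrite mul_row_col mulmxN !IM_mul; apply/matrixP => a c; rewrite !mxE !addn0.
  case: eqP => e /=; last by rewrite oppr0 addr0.
  have hc1 : (c < n1)%N by have := ltn_ord a; lia.
  have hc2 : (c + s < nc)%N by have := ltn_ord a; lia.
  by rewrite hc1 hc2 addNr.
rewrite -(mxrank_leqif_eq sM).2 mxrank_ker (eqP fM) (eqP fP).
apply/eqP; lia.
Qed.
Lemma hom_sub (k : fieldType) t (V W : rep k) (F E : forall i, 'M[k]_(rdim V i, rdim W i)) :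
  is_hom t F -> is_hom t E -> is_hom t (fun i => F i - E i).
Proof.
move=> [a1 b1] [a2 b2]; split=> i h1 h2.
  by rewrite mulmxBr mulmxBl a1 // a2.
by rewrite mulmxBr mulmxBl b1 // b2.
Qed.

Lemma rows_eq_ent (k : fieldType) m n (F E : 'M[k]_(m, n)) (x : 'I_m) :
  row x F = row x E -> forall c, ent (F - E) x c = 0.
Proof.
move=> h c; rewrite ent_sub; case: (boolP (c < n)%N) => hc.
  rewrite -[c]/(nat_of_ord (Ordinal hc)) !entE.
  have := congr1 (fun M : 'M[k]_(1, n) => M ord0 (Ordinal hc)) h; rewrite !mxE => ->.
  by rewrite subrr.
by rewrite !ent_oob ?subrr // negb_and hc orbT.
Qed.

Lemma ralphaD (k : fieldType) X i :
  ralpha (Delta k X) i = incl_mx k (count X (iota 1 i)) (count X (iota 1 i.+1)).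
Proof. by []. Qed.
Lemma rbetaD (k : fieldType) X i :
  rbeta (Delta k X) i = shift_mx k (count X (iota 1 i.+2)) (count X (iota 1 i)).
Proof. by []. Qed.

Lemma rdimD (k : fieldType) X i : rdim (Delta k X) i = count X (iota 1 i).
Proof. by []. Qed.

Lemma ralphaS (k : fieldType) (V W : rep k) i :
  ralpha (dsum V W) i = block_mx (ralpha V i) 0 0 (ralpha W i).
Proof. by []. Qed.
Lemma rbetaS (k : fieldType) (V W : rep k) i :
  rbeta (dsum V W) i = block_mx (rbeta V i) 0 0 (rbeta W i).
Proof. by []. Qed.

Unset Implicit Arguments.
Theorem lemma4p3 (k : closedFieldType) (d : seq bool) (b : nat) :
  thin d -> e d = 1%N -> int_even_end d b ->
  let t := size d in
  let c := maxJ d in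
  let T := Delta k (inJ d) in
  let PB := Proj k b in
  let PB1 := Proj k b.-1 in
  let PC := Proj k c in
  (* phi^{b-1}: last basis vector of P(b)_t |-> last basis vector of P(b-1)_t *)
  let cond1 := fun f : forall i, 'M[k]_(rdim PB i, rdim PB1 i) =>
    is_hom t f /\
    forall (x : 'I_(rdim PB t)) (y : 'I_(rdim PB1 t)),
      (x : nat).+1 = rdim PB t -> (y : nat).+1 = rdim PB1 t ->
      row x (f t) = delta_mx 0 y in
  (* phi^b: e_r in P(b)_t = k^r |-> e_r in P(c)_t *)
  let cond2 := fun g : forall i, 'M[k]_(rdim PB i, rdim PC i) =>
    is_hom t g /\
    forall (x : 'I_(rdim PB t)) (y : 'I_(rdim PC t)),
      (x : nat).+1 = rdim PB t -> (y : nat) = x ->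
      row x (g t) = delta_mx 0 y in
  (exists f g, cond1 f /\ cond2 g) /\
  forall f g, cond1 f -> cond2 g ->
    (* psi = (phi^{b-1}, phi^b) is injective *)
    (forall i, (1 <= i <= t)%N -> row_free (row_mx (f i) (g i))) /\
    (* and its cokernel is T: there is an epimorphism onto T with kernel im psi *)
    exists pi : forall i, 'M[k]_(rdim (dsum PB1 PC) i, rdim T i),
      is_hom t pi /\
      forall i, (1 <= i <= t)%N ->
        row_full (pi i) /\ (row_mx (f i) (g i) == kermx (pi i))%MS.
Proof.
move=> Hthin He Hb t c T PB PB1 PC cond1 cond2.
have htd : size d = t by [].
clearbody t.
have [p hp1 hp2] := hasP Hb.
move: hp2 => /and4P [hs hp hbt hodd].
case/andP: hs => _ /andP[hpb /andP[_ /andP[_ /andP[_ h6]]]].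
case/and4P: Hthin => _ _ hdt _.
have htb : size d != b.+1 by apply/eqP => ee; rewrite -ee hdt in h6.
have hp2m : ((b.+1 - p) %% 2 = 0)%N by rewrite modn2 (negbTE hodd).
rewrite mem_iota in hp1.
have hb3 : (3 <= b)%N by lia.
have hbt2 : (b.+2 <= t)%N by rewrite -htd; lia.
have hpb1 : b.-1 = (b - 1)%N by rewrite subn1.
have hbs : Defs.bseq d = [:: b].
  have hb_in : b \in Defs.bseq d by rewrite mem_filter Hb mem_iota; apply/andP; split; lia.
  move: hb_in He; rewrite /e; case: (Defs.bseq d) => [|x [|y s]] //=.
  by rewrite inE => /eqP ->.
have inJE : forall j, inJ d j = [&& (1 <= j)%N, (j <= t)%N &
   ((j <= b - 1) && (j %% 2 == (b - 1) %% 2)) || ((b + 2 <= j) && (j %% 2 == b %% 2))]%N.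
  by move=> j; rewrite /inJ hbs /= !oddE htd.
have key : forall c0, (1 <= c0 <= t)%N -> inJ d c0 ->
    (forall j, (1 <= j <= t)%N -> inJ d j -> (j <= c0)%N) -> maxJ d = c0.
  move=> c0 h1 h2 h3; apply/eqP; rewrite eqn_leq; apply/andP; split.
    apply/bigmax_leqP_seq => j; rewrite mem_iota => hj hJ; apply: h3 => //; rewrite -htd; lia.
  by apply: (@leq_bigmax_seq _ _ _ (fun j => j)); rewrite // mem_iota; rewrite htd; lia.
have hcv : (c %% 2 = b %% 2 /\ b + 2 <= c /\ c <= t /\ t <= c.+1)%N.
  case: (boolP (t %% 2 == b %% 2)%N) => hpt.
    have -> : c = t.
      rewrite /c; apply: key; rewrite ?inJE; try lia.
    lia.
  have -> : c = (t - 1)%N.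
    rewrite /c; apply: key; rewrite ?inJE; try lia.
  by move=> j hj; rewrite inJE; lia.
  lia.
clearbody c.
have hnT : forall i, (i <= t)%N -> count (inJ d) (iota 1 i) =
    ((minn i (b - 1) + (b - 1) %% 2) %/ 2 + (i - b) %/ 2)%N.
  elim=> [|i IH] hi; first by rewrite /=; lia.
  rewrite count_iotaS IH ?inJE; lia.
pose s := (b %% 2)%N.
pose E := fun i => @IM k s (count (Pset b) (iota 1 i)) (count (Pset b.-1) (iota 1 i)).
pose G := fun i => @IM k 0 (count (Pset b) (iota 1 i)) (count (Pset c) (iota 1 i)).
have homE : @is_hom k t PB PB1 E.
  split=> i h1 h2; rewrite ?ralphaD ?rbetaD /E ?incl_IM ?shift_IM; apply: IM_mulE; rewrite /s; try lia;
    move=> a c'; rewrite /PB /PB1 /Proj !rdimD !cntP => ha hc' ea; lia.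
have homG : @is_hom k t PB PC G.
  split=> i h1 h2; rewrite ?ralphaD ?rbetaD /G ?incl_IM ?shift_IM; apply: IM_mulE; try lia;
    move=> a c'; rewrite /PB /PC /Proj !rdimD !cntP => ha hc' ea; lia.
have c1E : cond1 E.
  split=> // x y; rewrite /= => hx hy; apply/rowP => j; rewrite !mxE eqxx /=.
  suff -> : (x == j + s :> nat)%N = (j == y) by [].
  have hx' : ((x : nat).+1 = (minn t b + b %% 2) %/ 2)%N by rewrite hx cntP.
  have hy' : ((y : nat).+1 = (minn t b.-1 + b.-1 %% 2) %/ 2)%N by rewrite hy cntP.
  apply/eqP/eqP => [h|h].
    apply: val_inj => /=; rewrite /s in h; rewrite hpb1 in hy'; move: hx' hy' h; move: (nat_of_ord x) (nat_of_ord y) (nat_of_ord j) => X Y J; lia.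
  rewrite h /s; rewrite hpb1 in hy'; move: hx' hy'; move: (nat_of_ord x) (nat_of_ord y) => X Y; lia.
have c2G : cond2 G.
  split=> // x y; rewrite /= => hx hy; apply/rowP => j; rewrite !mxE eqxx /= addn0.
  suff -> : (x == j :> nat) = (j == y) by [].
  apply/eqP/eqP => [h|h].
    by apply: val_inj => /=; rewrite hy.
  by rewrite h hy.
split; first by exists E, G.
move=> f g [hf1 hf2] [hg1 hg2].
have nbt : (0 < count (Pset b) (iota 1 t))%N by rewrite cntP; lia.
have n1t : (0 < count (Pset b.-1) (iota 1 t))%N by rewrite cntP; lia.
have nbc : ((count (Pset b) (iota 1 t)).-1 < count (Pset c) (iota 1 t))%N by rewrite !cntP; lia.
have hxl : ((count (Pset b) (iota 1 t)).-1 < count (Pset b) (iota 1 t))%N by rewrite ltn_predL.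
have hyl : ((count (Pset b.-1) (iota 1 t)).-1 < count (Pset b.-1) (iota 1 t))%N by rewrite ltn_predL.
pose x0 : 'I_(count (Pset b) (iota 1 t)) := Ordinal hxl.
pose y0 : 'I_(count (Pset b.-1) (iota 1 t)) := Ordinal hyl.
pose z0 : 'I_(count (Pset c) (iota 1 t)) := Ordinal nbc.
have hx0 : (x0 : nat).+1 = count (Pset b) (iota 1 t) by rewrite /= prednK.
have hy0 : (y0 : nat).+1 = count (Pset b.-1) (iota 1 t) by rewrite /= prednK.
have h1b : (1 <= b)%N by lia.
have hbt' : (b <= t)%N by lia.
have ef : forall i, (1 <= i <= t)%N -> f i = E i.
  move=> i hi; apply/subr0_eq.
  apply: (@hom_unique k (Pset b.-1) t b (fun i => f i - E i) h1b hbt' (@hom_sub k t PB PB1 f E hf1 homE) _ i hi).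
  move=> c'; have := @rows_eq_ent k _ _ (f t) (E t) x0.
  by rewrite (hf2 x0 y0 hx0 hy0) (c1E.2 x0 y0 hx0 hy0) => H; exact: H.
have eg : forall i, (1 <= i <= t)%N -> g i = G i.
  move=> i hi; apply/subr0_eq.
  apply: (@hom_unique k (Pset c) t b (fun i => g i - G i) h1b hbt' (@hom_sub k t PB PC g G hg1 homG) _ i hi).
  move=> c'; have := @rows_eq_ent k _ _ (g t) (G t) x0.
  by rewrite (hg2 x0 z0 hx0 erefl) (c2G.2 x0 z0 hx0 erefl) => H; exact: H.
have VO : forall i, (1 <= i <= t)%N ->
  let M := row_mx (E i) (G i) in
  let P := col_mx (- @IM k 0 (count (Pset b.-1) (iota 1 i)) (count (inJ d) (iota 1 i)))
             (@IM k s (count (Pset c) (iota 1 i)) (count (inJ d) (iota 1 i))) in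
  [/\ row_free M, row_full P & (M == kermx P)%MS].
  move=> i hi; apply: vertex_ok; have := hnT i ltac:(lia); rewrite !cntP /s; lia.
split.
  by move=> i hi; rewrite ef // eg //; case: (VO i hi).
exists (fun i => col_mx (- @IM k 0 (count (Pset b.-1) (iota 1 i)) (count (inJ d) (iota 1 i)))
             (@IM k s (count (Pset c) (iota 1 i)) (count (inJ d) (iota 1 i)))).
split; last by move=> i hi; rewrite ef // eg //; case: (VO i hi).
split=> i h1 h2.
  rewrite ralphaS !ralphaD mul_block_col !mul0mx addr0 add0r mul_col_mx !mulmxN !mulNmx !incl_IM.
  congr col_mx; [congr GRing.opp|]; apply: IM_mulE; try lia; move=> a c'; rewrite !rdimD;
    have := hnT i ltac:(lia); have := hnT i.+1 ltac:(lia); rewrite !cntP /s; lia.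
rewrite rbetaS !rbetaD mul_block_col !mul0mx addr0 add0r mul_col_mx !mulmxN !mulNmx !shift_IM.
congr col_mx; [congr GRing.opp|]; apply: IM_mulE; try lia; move=> a c'; rewrite !rdimD;
  have := hnT i ltac:(lia); have := hnT i.+2 ltac:(lia); rewrite !cntP /s; lia.
Qed.
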